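(* Let $(C,\mathfrak p,\mathfrak d)$ be a regular $q$-cycle coalgebra with $\mathfrak p_{11}^1\ne0$. Then $\mathfrak d=\mathfrak p$ (equivalently, the associated solution of the braid equation is involutive).
   Context: $K$ is an algebraically closed field of characteristic $0$ and $n\ge2$. $C$ is the coalgebra dual to $K[y]/\langle y^n\rangle$: basis $x_0,\dots,x_{n-1}$, $\Delta(x_i)=\sum_{j+k=i}x_j\otimes x_k$, $\epsilon(x_i)=\delta_{i0}$; $C\otimes C$ has the tensor product coalgebra structure; Sweedler notation $\Delta(b)=b_{(1)}\otimes b_{(2)}$. For linear maps $\mathfrak p,\mathfrak d\colon C\otimes C\to C$ write $a\cdot b=\mathfrak p(a\otimes b)$, $a:b=\mathfrak d(a\otimes b)$, $\mathfrak p(x_i\otimes x_j)=\sum_{k=0}^{n-1}\mathfrak p_{ij}^kx_k$, $\mathfrak d(x_i\otimes x_j)=\sum_{k=0}^{n-1}\mathfrak d_{ij}^kx_k$. A triple $(C,\mathfrak p,\mathfrak d)$ with $\mathfrak p,\mathfrak d$ coalgebra morphisms is a regular $q$-magma coalgebra if there are coalgebra morphisms $a\otimes b\mapsto a^b$, $a\otimes b\mapsto a_b$ from $C\otimes C$ to $C$ with $a^{b_{(1)}}\cdot b_{(2)}=(a\cdot b_{(1)})^{b_{(2)}}=\epsilon(b)a$ and $(a:b_{(2)})_{b_{(1)}}=a_{b_{(2)}}:b_{(1)}=\epsilon(b)a$. It is a regular $q$-cycle coalgebra if moreover for all $a,b,c$: (1) $(a\cdot b_{(1)})\cdot(c:b_{(2)})=(a\cdot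 c_{(2)})\cdot(b\cdot c_{(1)})$; (2) $(a\cdot b_{(1)}):(c\cdot b_{(2)})=(a:c_{(2)})\cdot(b:c_{(1)})$; (3) $(a:b_{(1)}):(c:b_{(2)})=(a:c_{(2)}):(b\cdot c_{(1)})$. *)

(* Defs.v *)
From HB Require Import structures.
From mathcomp Require Import all_boot all_order all_algebra.
Set Implicit Arguments. Unset Strict Implicit. Unset Printing Implicit Defensive.
Import GRing.Theory.
Local Open Scope ring_scope.

(* The coalgebra C dual to K[y]/<y^n>: elements are coefficient row vectors
   'rV[K]_n w.r.t. the basis x_0,...,x_{n-1}; Delta(x_i) = sum_{j+k=i} x_j (x) x_k,
   eps(x_i) = delta_{i0}. *)

(* structure constants f_{ij}^k of a linear map C (x) C -> C *)
Definition sconst (K : nzRingType) (n : nat) := 'I_n -> 'I_n -> 'I_n -> K.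

Definition bx {K : nzRingType} {n : nat} (i : 'I_n) : 'rV[K]_n := delta_mx 0 i.

Definition bil (K : nzRingType) (n : nat) (f : sconst K n) (a b : 'rV[K]_n)
  : 'rV[K]_n :=
  \sum_(i < n) \sum_(j < n) (a 0 i * b 0 j) *: \row_(k < n) f i j k.

Definition eps (K : nzRingType) (n : nat) (a : 'rV[K]_n) : K :=
  \sum_(i < n | val i == 0%N) a 0 i.

(* coefficient of x_s (x) x_t in Delta(b) *)
Definition cop (K : nzRingType) (n : nat) (b : 'rV[K]_n) (s t : 'I_n) : K :=
  \sum_(m < n | val m == (s + t)%N) b 0 m.

(* Sweedler sum: sw F b = F(b_(1), b_(2)) for F bilinear *)
Definition sw (K : nzRingType) (n : nat) (F : 'rV[K]_n -> 'rV[K]_n -> 'rV[K]_n)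
  (b : 'rV[K]_n) : 'rV[K]_n :=
  \sum_(s < n) \sum_(t < n) cop b s t *: F (bx s) (bx t).

(* the linear map with structure constants f is a coalgebra morphism
   C (x) C -> C (C (x) C with the tensor product coalgebra structure);
   checked on the basis x_i (x) x_j of C (x) C. *)
Definition coalg_morph (K : nzRingType) (n : nat) (f : sconst K n) : Prop :=
  (forall i j k l : 'I_n,
      \sum_(m < n | val m == (k + l)%N) f i j m =
      \sum_(a < n) \sum_(b < n) \sum_(c < n) \sum_(e < n)
         (if ((a + b)%N == val i) && ((c + e)%N == val j)
          then f a c k * f b e l else 0))
  /\ (forall i j : 'I_n,
      eps (\row_(k < n) f i j k) =
      (if (val i == 0%N) && (val j == 0%N) then 1 else 0)).

(* regular q-magma coalgebra (p, d coalgebra morphisms assumed separately):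
   u encodes a (x) b |-> a^b and v encodes a (x) b |-> a_b *)
Definition regular_qmagma (K : nzRingType) (n : nat) (p d : sconst K n) : Prop :=
  exists u v : sconst K n, coalg_morph u /\ coalg_morph v /\
   forall a b : 'rV[K]_n,
     [/\ sw (fun b1 b2 => bil p (bil u a b1) b2) b = eps b *: a,
         sw (fun b1 b2 => bil u (bil p a b1) b2) b = eps b *: a,
         sw (fun b1 b2 => bil v (bil d a b2) b1) b = eps b *: a &
         sw (fun b1 b2 => bil d (bil v a b2) b1) b = eps b *: a].

Definition qcycle_ids (K : nzRingType) (n : nat) (p d : sconst K n) : Prop :=
  forall a b c : 'rV[K]_n,
    [/\ sw (fun b1 b2 => bil p (bil p a b1) (bil d c b2)) b
        = sw (fun c1 c2 => bil p (bil p a c2) (bil p b c1)) c,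
        sw (fun b1 b2 => bil d (bil p a b1) (bil p c b2)) b
        = sw (fun c1 c2 => bil p (bil d a c2) (bil d b c1)) c &
        sw (fun b1 b2 => bil d (bil d a b1) (bil d c b2)) b
        = sw (fun c1 c2 => bil d (bil d a c2) (bil p b c1)) c].

Definition regular_qcycle (K : nzRingType) (n : nat) (p d : sconst K n) : Prop :=
  [/\ coalg_morph p, coalg_morph d, regular_qmagma p d & qcycle_ids p d].

(* Main.v *)
Require Import Defs.
From HB Require Import structures.
From mathcomp Require Import all_boot all_order all_algebra.
From mathcomp Require Import zify ring.
Set Implicit Arguments. Unset Strict Implicit. Unset Printing Implicit Defensive.
Import GRing.Theory.
Local Open Scope ring_scope.

Lemma sum_nz (K : fieldType) (T : finType) (F : T -> K) :
  \sum_y F y != 0 -> exists y, F y != 0.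
Proof.
case: (pickP (fun y => F y != 0)) => [y Hy|H]; first by exists y.
by rewrite big1 ?eqxx // => y _; move: (H y) => /negbFE/eqP.
Qed.

Lemma sum_supp1 (K : fieldType) (T : finType) (F : T -> K) (x : T) :
  (forall y, F y != 0 -> y = x) -> \sum_y F y = F x.
Proof.
move=> H; rewrite (bigD1 x) //= big1 ?addr0 // => y yx.
apply/eqP; apply/negPn/negP => /H e; by rewrite e eqxx in yx.
Qed.

Lemma sum4_1 (K : fieldType) n (G : 'I_n -> 'I_n -> 'I_n -> 'I_n -> K) a0 b0 c0 e0 :
  (forall a b c e, G a b c e != 0 -> [/\ a = a0, b = b0, c = c0 & e = e0]) ->
  \sum_a \sum_b \sum_c \sum_e G a b c e = G a0 b0 c0 e0.
Proof.
move=> H.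
rewrite (@sum_supp1 _ _ _ a0); last first.
  by move=> a /sum_nz [b /sum_nz [c /sum_nz [e /H []]]].
rewrite (@sum_supp1 _ _ _ b0); last first.
  by move=> b /sum_nz [c /sum_nz [e /H []]].
rewrite (@sum_supp1 _ _ _ c0); last first.
  by move=> c /sum_nz [e /H []].
by rewrite (@sum_supp1 _ _ _ e0) // => e /H [].
Qed.

Lemma sum4_2 (K : fieldType) n (G : 'I_n -> 'I_n -> 'I_n -> 'I_n -> K)
   a1 b1 c1 e1 a2 b2 c2 e2 :
  ~~ [&& a2 == a1, b2 == b1, c2 == c1 & e2 == e1] ->
  (forall a b c e, G a b c e != 0 ->
     [/\ a = a1, b = b1, c = c1 & e = e1] \/ [/\ a = a2, b = b2, c = c2 & e = e2]) ->
  \sum_a \sum_b \sum_c \sum_e G a b c e = G a1 b1 c1 e1 + G a2 b2 c2 e2.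
Proof.
move=> ne H.
pose T a b c e := [&& a == a1, b == b1, c == c1 & e == e1].
have -> : \sum_a \sum_b \sum_c \sum_e G a b c e =
   \sum_a \sum_b \sum_c \sum_e (if T a b c e then G a b c e else 0) +
   \sum_a \sum_b \sum_c \sum_e (if T a b c e then 0 else G a b c e).
  rewrite -big_split; apply: eq_bigr => a _; rewrite -big_split;
  apply: eq_bigr => b _; rewrite -big_split; apply: eq_bigr => c _;
  rewrite -big_split; apply: eq_bigr => e _ /=; by case: ifP; rewrite ?addr0 ?add0r.
rewrite (@sum4_1 _ _ _ a1 b1 c1 e1); last first.
  move=> a b c e; case: ifP; last by rewrite eqxx.
  by rewrite /T => /and4P [/eqP -> /eqP -> /eqP -> /eqP ->].
rewrite (@sum4_1 _ _ _ a2 b2 c2 e2); last first.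
  move=> a b c e; case: ifP; first by rewrite eqxx.
  move=> HT /H [[? ? ? ?]|//]; subst; by rewrite /T !eqxx in HT.
by rewrite /T !eqxx /= (negbTE ne).
Qed.

Lemma bxE (K : nzRingType) n (i j : 'I_n) : (bx i : 'rV[K]_n) 0 j = (i == j)%:R.
Proof. by rewrite /bx mxE eqxx eq_sym. Qed.

Lemma bilE (K : nzRingType) n (f : sconst K n) a b k :
  (bil f a b) 0 k = \sum_i \sum_j a 0 i * b 0 j * f i j k.
Proof.
rewrite /bil summxE; apply: eq_bigr => i _; rewrite summxE; apply: eq_bigr => j _.
by rewrite !mxE.
Qed.

Lemma swE (K : nzRingType) n (F : 'rV[K]_n -> 'rV[K]_n -> 'rV[K]_n) b k :
  (sw F b) 0 k = \sum_s \sum_t cop b s t * (F (bx s) (bx t)) 0 k.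
Proof.
rewrite /sw summxE; apply: eq_bigr => i _; rewrite summxE; apply: eq_bigr => j _.
by rewrite !mxE.
Qed.

Lemma copE (K : fieldType) n (B s t : 'I_n) :
  cop (bx B : 'rV[K]_n) s t = ((s + t)%N == B)%:R.
Proof.
rewrite /cop; case: eqP => [e|ne].
  rewrite (eq_bigl (pred1 B)); first by rewrite big_pred1_eq bxE eqxx.
  by move=> m /=; rewrite e -val_eqE eq_sym.
rewrite big1 // => m /eqP e; rewrite bxE; case: eqP => // E.
by exfalso; apply: ne; rewrite E e.
Qed.

Lemma bil_bx (K : fieldType) n (f : sconst K n) i j k :
  (bil f (bx i) (bx j)) 0 k = f i j k.
Proof.
rewrite bilE (@sum_supp1 _ _ _ i); last first.
  move=> x /sum_nz [y]; rewrite !bxE; case: (i =P x) => [->//|_].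
  by rewrite !mul0r eqxx.
rewrite (@sum_supp1 _ _ _ j); last first.
  move=> y; rewrite !bxE; case: (j =P y) => [->//|_].
  by rewrite mulr0 mul0r eqxx.
by rewrite !bxE !eqxx !mul1r.
Qed.

Lemma epsE0 (K : fieldType) n (o : 'I_n) : val o = 0%N -> eps (bx o : 'rV[K]_n) = 1.
Proof.
move=> o0; rewrite /eps (eq_bigl (pred1 o)); first by rewrite big_pred1_eq bxE eqxx.
by move=> m /=; rewrite -val_eqE o0.
Qed.

Lemma Lshape (K : fieldType) n (f g h : sconst K n) i j B k :
  (sw (fun b1 b2 => bil h (bil f (bx i) b1) (bil g (bx j) b2)) (bx B)) 0 k =
  \sum_(s : 'I_n) \sum_(t : 'I_n) \sum_(a : 'I_n) \sum_(b : 'I_n) ((s + t)%N == B)%:R * (f i s a * g j t b * h a b k).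
Proof.
rewrite swE; apply: eq_bigr => s _; apply: eq_bigr => t _.
rewrite copE bilE mulr_sumr; apply: eq_bigr => a _; rewrite mulr_sumr; apply: eq_bigr => b _.
by rewrite !bil_bx mulrA.
Qed.

Lemma Rshape (K : fieldType) n (f g h : sconst K n) i j B k :
  (sw (fun c1 c2 => bil h (bil f (bx i) c2) (bil g (bx B) c1)) (bx j)) 0 k =
  \sum_(s : 'I_n) \sum_(t : 'I_n) \sum_(a : 'I_n) \sum_(b : 'I_n) ((s + t)%N == j)%:R * (f i t a * g B s b * h a b k).
Proof.
rewrite swE; apply: eq_bigr => s _; apply: eq_bigr => t _.
rewrite copE bilE mulr_sumr; apply: eq_bigr => a _; rewrite mulr_sumr; apply: eq_bigr => b _.
by rewrite !bil_bx mulrA.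
Qed.


Lemma valE n (x : 'I_n) : val x = nat_of_ord x. Proof. by []. Qed.
Ltac nlia := repeat (match goal with
    | H : @eq ?T _ _ |- _ => unify T nat; revert H
    | H : is_true (leq _ _) |- _ => revert H
    | H : ~ (@eq nat _ _) |- _ => revert H end);
  rewrite ?valE; lia.

Lemma ifnz (K : fieldType) (b : bool) (x : K) : (if b then x else 0) != 0 -> b /\ x != 0.
Proof. by case: b => //; rewrite eqxx. Qed.

Lemma mulnz (K : fieldType) (x y : K) : x * y != 0 -> x != 0 /\ y != 0.
Proof. by rewrite mulf_eq0 negb_or => /andP. Qed.

Lemma natrnz (K : fieldType) (b : bool) : (b%:R : K) != 0 -> b.
Proof. by case: b => //; rewrite eqxx. Qed.

Lemma cm0 (K : fieldType) n (f : sconst K n) : coalg_morph f ->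
  forall i j k : 'I_n, val k = 0%N -> f i j k = if (val i == 0%N) && (val j == 0%N) then 1 else 0.
Proof.
move=> [_ H] i j k k0; rewrite -H /eps (eq_bigl (pred1 k)); first by rewrite big_pred1_eq mxE.
by move=> m /=; rewrite -val_eqE k0.
Qed.

Lemma cm0_nz (K : fieldType) n (f : sconst K n) : coalg_morph f ->
  forall i j k : 'I_n, f i j k != 0 -> val k = 0%N -> val i = 0%N /\ val j = 0%N.
Proof.
move=> H i j k nz k0; move: nz; rewrite (cm0 H) //.
by case: (val i =P 0%N) => [->|_]; case: (val j =P 0%N) => [->|_] //=; rewrite eqxx.
Qed.

Lemma cm_rec (K : fieldType) n (f : sconst K n) : coalg_morph f ->
  forall (o1 k k' : 'I_n), val o1 = 1%N -> val k = (val k').+1 -> forall i j : 'I_n,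
  f i j k = \sum_(a : 'I_n) \sum_(b : 'I_n) \sum_(c : 'I_n) \sum_(e : 'I_n)
         (if ((a + b)%N == val i) && ((c + e)%N == val j)
          then f a c o1 * f b e k' else 0).
Proof.
move=> [H _] o1 k k' h1 hk i j; rewrite -H (eq_bigl (pred1 k)); first by rewrite big_pred1_eq.
by move=> m /=; rewrite -val_eqE hk h1.
Qed.

Lemma cm_top (K : fieldType) n (f : sconst K n) : coalg_morph f ->
  forall (o1 l : 'I_n), val o1 = 1%N -> val l = n.-1 -> forall i j : 'I_n,
  \sum_(a : 'I_n) \sum_(b : 'I_n) \sum_(c : 'I_n) \sum_(e : 'I_n)
         (if ((a + b)%N == val i) && ((c + e)%N == val j)
          then f a c o1 * f b e l else 0) = 0.
Proof.
move=> [H _] o1 l h1 hl i j; rewrite -H big_pred0 // => m.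
apply/negbTE; rewrite h1 hl.
have n0 : (0 < n)%N := leq_ltn_trans (leq0n _) (ltn_ord m).
by rewrite add1n prednK // neq_ltn ltn_ord.
Qed.

Lemma f001 (K : fieldType) n (f : sconst K n) : coalg_morph f ->
  forall (o0 o1 : 'I_n), val o0 = 0%N -> val o1 = 1%N -> f o0 o0 o1 = 0.
Proof.
move=> H o0 o1 h0 h1.
have pw : forall k (kk : 'I_n), val kk = k.+1 -> f o0 o0 kk = f o0 o0 o1 ^+ k.+1.
  elim=> [|k IH] kk hk; first by rewrite expr1; congr f; apply: val_inj; rewrite hk h1.
  have hk' : (k.+1 < n)%N by rewrite -hk; exact: ltnW (ltn_ord kk).
  rewrite (cm_rec H (k':=Ordinal hk') h1) // (@sum4_1 _ _ _ o0 o0 o0 o0).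
    by rewrite !h0 /= (IH (Ordinal hk') erefl) -exprS.
  move=> a b c e H1. move: (ifnz H1) => [H2 _]. move/andP: H2 => [/eqP x /eqP y].
  split; apply: val_inj; rewrite /= h0; rewrite ?valE in x y h0 *; lia.
have n1 : (n.-1 < n)%N by have := ltn_ord o1; nlia.
have := cm_top H (l := Ordinal n1) h1 erefl o0 o0.
rewrite (@sum4_1 _ _ _ o0 o0 o0 o0); last first.
  move=> a b c e /ifnz [/andP [/eqP x /eqP y] _].
  by split; apply: val_inj; rewrite /= h0; nlia.
rewrite !h0 /= (pw n.-2 (Ordinal n1)); last by have := ltn_ord o1; rewrite /= h1; nlia.
rewrite -exprS => /eqP; rewrite expf_eq0 => /andP [_ /eqP //].
Qed.

Lemma sum4_0 (K : fieldType) n (G : 'I_n -> 'I_n -> 'I_n -> 'I_n -> K) :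
  (forall a b c e, G a b c e != 0 -> False) ->
  \sum_a \sum_b \sum_c \sum_e G a b c e = 0.
Proof.
move=> H; apply: big1 => a _; apply: big1 => b _; apply: big1 => c _; apply: big1 => e _.
by apply/eqP; apply/negPn/negP => /H.
Qed.

Lemma fdeg (K : fieldType) n (f : sconst K n) : coalg_morph f ->
  forall i j k : 'I_n, f i j k != 0 -> (val k <= val i + val j)%N.
Proof.
move=> H.
have base : forall i j k : 'I_n, val k = 1%N -> (val i + val j = 0)%N -> f i j k = 0.
  move=> i j k k1 ij; have ji : j = i by apply: val_inj; nlia.
  by rewrite ji (f001 H (o0:=i)) //; nlia.
suff S : forall m (i j k : 'I_n), val k = m.+1 -> (val i + val j < m.+1)%N -> f i j k = 0.
  move=> i j k nz; case: (leqP (val k) (val i + val j)) => // lt.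
  case hk: (val k) => [|m]; first by rewrite hk in lt.
  by rewrite (S m i j k hk) ?eqxx // -hk in nz.
elim=> [|m IH] i j k hk lt; first by apply: base => //; nlia.
have hm : (m.+1 < n)%N by rewrite -hk; exact: ltnW (ltn_ord k).
have h1n : (1 < n)%N by have := ltn_ord k; nlia.
rewrite (cm_rec H (o1 := Ordinal h1n) (k' := Ordinal hm)) //.
apply: sum4_0 => a b c e /ifnz [/andP [/eqP x /eqP y] /mulnz [n1 n2]].
have : (1 <= val a + val c)%N.
  case: (leqP 1 (val a + val c)) => // z.
  by move: n1; rewrite (base a c (Ordinal h1n)) ?eqxx //; nlia.
have : (m.+1 <= val b + val e)%N.
  case: (leqP m.+1 (val b + val e)) => // l.
  by move: n2; rewrite (IH b e (Ordinal hm)) ?eqxx.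
nlia.
Qed.



Lemma lead (K : fieldType) n (f : sconst K n) : coalg_morph f ->
  forall (o0 o1 : 'I_n), val o0 = 0%N -> val o1 = 1%N ->
  forall k (x kk : 'I_n), val kk = k.+1 ->
   (val x = k.+1 -> f x o0 kk = f o1 o0 o1 ^+ k.+1) /\
   (val x = k -> f x o1 kk = (k.+1)%:R * f o1 o0 o1 ^+ k * f o0 o1 o1).
Proof.
move=> H o0 o1 h0 h1; rewrite valE in h0; rewrite valE in h1; elim=> [|k IH] x kk hk; rewrite valE in hk.
  have -> : kk = o1 by apply: ord_inj; rewrite hk h1.
  split=> hx.
    by rewrite expr1; have -> : x = o1 by apply: ord_inj; rewrite hx h1.
  rewrite expr0 mulr1 mulr1n; have -> : x = o0 by apply: ord_inj; rewrite hx h0.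
  by rewrite mul1r.
have hk' : (k.+1 < n)%N by rewrite -hk; exact: ltnW (ltn_ord kk).
have hb1 : (k < n)%N by apply: ltnW.
pose K' := Ordinal hk'; pose b1 := Ordinal hb1.
have hK' : nat_of_ord K' = k.+1 by []. have hb1' : nat_of_ord b1 = k by [].
clearbody K' b1.
have fd := fdeg H.
split=> hx; rewrite (cm_rec H (o1 := o1) (k' := K')); try (by rewrite ?valE ?hK' ?hk ?h1); rewrite ?valE; rewrite valE in hx.
  rewrite (@sum4_1 _ _ _ o1 K' o0 o0).
    rewrite ?h0 ?h1 ?hx /= ?addn0 ?add1n ?eqxx /=.
    rewrite hK' eqxx /=. by rewrite (proj1 (IH K' K' hK') hK') -exprS.
  move=> a b c e /ifnz [/andP [/eqP u /eqP v] /mulnz [n1 n2]].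
  move: (fd _ _ _ n1) (fd _ _ _ n2) => d1 d2.
  by split; apply: ord_inj; rewrite ?h0 ?h1 /=; nlia.
rewrite (@sum4_2 _ _ _ o1 b1 o0 o1 o0 K' o1 o0).
- rewrite ?h0 ?h1 ?hx ?hK' ?hb1' /= ?addn0 ?add1n ?eqxx /=.
  rewrite (proj2 (IH b1 K' hK') hb1') (proj1 (IH K' K' hK') hK').
  rewrite -[(k.+2)%:R]natr1 exprS; ring.
- by apply/negP => /and4P [/eqP e _ _ _]; rewrite e in h0; rewrite h0 in h1.
move=> a b c e /ifnz [/andP [/eqP u /eqP v] /mulnz [n1 n2]].
move: (fd _ _ _ n1) (fd _ _ _ n2) => d1 d2.
have [c0|c1] : val c = 0%N \/ val c = 1%N by rewrite h1 in v; nlia.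
  by left; split; apply: ord_inj; rewrite ?h0 ?h1 /=; rewrite h1 in v; nlia.
by right; split; apply: ord_inj; rewrite ?h0 ?h1 /=; rewrite h1 in v; nlia.
Qed.



Lemma beta0 (K : fieldType) n (f : sconst K n) : coalg_morph f ->
  [pchar K] =i pred0 ->
  forall (o0 o1 : 'I_n), val o0 = 0%N -> val o1 = 1%N ->
  f o1 o0 o1 != 0 -> f o0 o1 o1 = 0.
Proof.
move=> H ch o0 o1 h0 h1 a0; rewrite valE in h0; rewrite valE in h1.
have n2 : (1 < n)%N by rewrite -h1 ltn_ord.
have hL : (n.-1 < n)%N by nlia.
have hb : (n.-2 < n)%N by nlia.
pose L := Ordinal hL; pose b1 := Ordinal hb.
have hL' : nat_of_ord L = n.-1 by []. have hb' : nat_of_ord b1 = n.-2 by [].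
clearbody L b1.
have fd := fdeg H.
have := cm_top H (l := L) h1 hL' L o1.
rewrite (@sum4_2 _ _ _ o1 b1 o0 o1 o0 L o1 o0); first last.
- move=> a b c e /ifnz [/andP [/eqP u /eqP v] /mulnz [m1 m2]].
  move: (fd _ _ _ m1) (fd _ _ _ m2) => d1 d2.
  have [c0|c1] : nat_of_ord c = 0%N \/ nat_of_ord c = 1%N by nlia.
    by left; split; apply: ord_inj; nlia.
  by right; split; apply: ord_inj; nlia.
- by apply/negP => /and4P [/eqP e _ _ _]; rewrite e in h0; rewrite h0 in h1.
rewrite ?valE h0 h1 hb' hL' /= ?eqxx.
rewrite /=.
rewrite (proj2 (lead H h0 h1 (k := n.-2) b1 (kk := L) _) _); try nlia.
rewrite (proj1 (lead H h0 h1 (k := n.-2) L (kk := L) _) _); try nlia.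
set a := f o1 o0 o1; set b := f o0 o1 o1.
have e : (1 + n.-2 == n.-1)%N by apply/eqP; nlia.
rewrite e /=.
have -> : a * ((n.-2).+1%:R * a ^+ n.-2 * b) + b * a ^+ (n.-2).+1 =
          (n%:R * a ^+ (n.-2).+1) * b.
  have -> : n = (n.-2).+2 by nlia.
  rewrite -[((n.-2).+2)%:R]natr1 exprS /=; ring.
move/eqP; rewrite !mulf_eq0 expf_eq0 (negbTE a0) andbF orbF.
by move/pcharf0P: ch => -> ; case/orP => /eqP //; nlia.
Qed.

Lemma lead1f (K : fieldType) n (f : sconst K n) : coalg_morph f ->
  forall (o0 o1 : 'I_n), val o0 = 0%N -> val o1 = 1%N -> f o0 o1 o1 = 0 ->
  forall x y k : 'I_n, f x y k != 0 -> nat_of_ord y = 1%N -> nat_of_ord k <> (nat_of_ord x).+1.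
Proof.
move=> H o0 o1 h0 h1 b0 x y k nz y1 kx.
have ey : y = o1 by apply: ord_inj; rewrite y1 -valE h1.
move: nz; rewrite ey (proj2 (lead H h0 h1 (k := nat_of_ord x) x (kk := k) kx) erefl).
by rewrite b0 mulr0 eqxx.
Qed.

Lemma lead0v (K : fieldType) n (f : sconst K n) : coalg_morph f ->
  forall (o0 o1 : 'I_n), val o0 = 0%N -> val o1 = 1%N -> f o1 o0 o1 = 1 ->
  forall x y k : 'I_n, nat_of_ord y = 0%N -> nat_of_ord x = nat_of_ord k -> f x y k = 1.
Proof.
move=> H o0 o1 h0 h1 a1 x y k y0 xk.
have ey : y = o0 by apply: ord_inj; rewrite y0 -valE h0.
case hk: (nat_of_ord k) => [|k'].
  rewrite (cm0 H); last by rewrite valE hk.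
  by rewrite !valE xk hk y0.
rewrite ey (proj1 (lead H h0 h1 (k := k') x (kk := k) hk)); first by rewrite a1 expr1n.
by rewrite valE xk.
Qed.

Lemma subl (K : fieldType) n (f : sconst K n) : coalg_morph f ->
  forall (o0 o1 : 'I_n), val o0 = 0%N -> val o1 = 1%N -> f o1 o0 o1 = 1 -> f o0 o1 o1 = 0 ->
  forall k (x : 'I_n), nat_of_ord x = k -> f x o1 x = k%:R * f o1 o1 o1.
Proof.
move=> H o0 o1 h0 h1 a1 b0; rewrite valE in h0; rewrite valE in h1.
have fd := fdeg H.
have l1 := lead1f H h0 h1 b0.
have l0 := lead0v H h0 h1 a1.
elim=> [|k IH] x hx.
  by rewrite (cm0 H) ?valE // hx h1 /= mul0r.
case: k IH x hx => [|k] IH x hx.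
  have -> : x = o1 by apply: ord_inj; rewrite hx h1.
  by rewrite mul1r.
have hk' : (k.+1 < n)%N by rewrite -hx; exact: ltnW (ltn_ord x).
pose K' := Ordinal hk'.
have hK' : nat_of_ord K' = k.+1 by [].
clearbody K'.
rewrite (cm_rec H (o1 := o1) (k' := K')); try (by rewrite ?valE ?hK' ?hx ?h1); rewrite ?valE.
rewrite (@sum4_2 _ _ _ o1 K' o1 o0 o1 K' o0 o1); first last.
- move=> a b c e /ifnz [/andP [/eqP u /eqP v] /mulnz [m1 m2]].
  move: (fd _ _ _ m1) (fd _ _ _ m2) => d1 d2.
  have [c0|c1] : nat_of_ord c = 0%N \/ nat_of_ord c = 1%N by nlia.
    have e1 : nat_of_ord e = 1%N by nlia.
    move: (l1 _ _ _ m2 e1) => l.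
    by right; split; apply: ord_inj; nlia.
  move: (l1 _ _ _ m1 c1) => l.
  by left; split; apply: ord_inj; nlia.
- by apply/negP => /and4P [_ _ /eqP e _]; rewrite e in h0; rewrite h0 in h1.
rewrite hx hK' h1 h0 /= !eqxx /=.
rewrite (l0 K' o0 K') ?h0 // (IH K' hK') a1 -[(k.+2)%:R]natr1; ring.
Qed.

Lemma sum4B (K : fieldType) n (F G : 'I_n -> 'I_n -> 'I_n -> 'I_n -> K) :
  \sum_a \sum_b \sum_c \sum_e F a b c e - \sum_a \sum_b \sum_c \sum_e G a b c e =
  \sum_a \sum_b \sum_c \sum_e (F a b c e - G a b c e).
Proof.
rewrite -sumrB; apply: eq_bigr => a _; rewrite -sumrB; apply: eq_bigr => b _.
rewrite -sumrB; apply: eq_bigr => c _; rewrite -sumrB; apply: eq_bigr => e _ //.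
Qed.

Lemma Elem (K : fieldType) n (p d : sconst K n) : coalg_morph p -> coalg_morph d ->
  forall (o1 : 'I_n), val o1 = 1%N ->
  forall m, (1 <= m)%N -> (forall x y : 'I_n, (nat_of_ord x + nat_of_ord y < m)%N -> d x y o1 = p x y o1) ->
  forall l (x y L : 'I_n), nat_of_ord L = l -> d x y L - p x y L != 0 ->
    (1 <= l)%N /\ (l + m <= nat_of_ord x + nat_of_ord y + 1)%N.
Proof.
move=> Hp Hd o1 h1 m m1 IHm; rewrite valE in h1.
have fdp := fdeg Hp; have fdd := fdeg Hd.
elim=> [|l IH] x y L hL.
  by rewrite (cm0 Hp) ?(cm0 Hd) ?valE ?hL // subrr eqxx.
case: l IH hL => [|l] IH hL.
  have -> : L = o1 by apply: ord_inj; rewrite hL h1.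
  move=> nz; split => //; case: (leqP m (nat_of_ord x + nat_of_ord y)) => [|lt]; first by nlia.
  by rewrite IHm // subrr eqxx in nz.
have hk' : (l.+1 < n)%N by rewrite -hL; exact: ltnW (ltn_ord L).
pose K' := Ordinal hk'.
have hK' : nat_of_ord K' = l.+1 by [].
clearbody K'.
move=> nz; split => //.
case: (leqP (l.+2 + m) (nat_of_ord x + nat_of_ord y + 1)) => // lt.
move: nz.
rewrite (cm_rec Hp (o1 := o1) (k' := K') (k := L)); try (by rewrite ?valE ?hK' ?hL ?h1).
rewrite (cm_rec Hd (o1 := o1) (k' := K') (k := L)); try (by rewrite ?valE ?hK' ?hL ?h1).
rewrite sum4B sum4_0 ?eqxx // => a b c e.
case: ifP => [/andP [/eqP u /eqP v]|]; last by rewrite subrr eqxx.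
have -> : d a c o1 * d b e K' - p a c o1 * p b e K' =
   (d a c o1 - p a c o1) * d b e K' + p a c o1 * (d b e K' - p b e K') by ring.
move=> nz.
have : (d a c o1 - p a c o1) * d b e K' != 0 \/ p a c o1 * (d b e K' - p b e K') != 0.
  case: (eqVneq ((d a c o1 - p a c o1) * d b e K') 0) => [e0|]; last by left.
  by right; move: nz; rewrite e0 add0r.
case=> /mulnz [q1 q2].
  have : (m <= nat_of_ord a + nat_of_ord c)%N.
    case: (leqP m (nat_of_ord a + nat_of_ord c)) => // lt'.
    by rewrite IHm // subrr eqxx in q1.
  move: (fdd _ _ _ q2) => d2; nlia.
move: (fdp _ _ _ q1) (IH b e K' hK' q2) => d1 [_ d2]; rewrite ?valE in d1; nlia.
Qed.



Record Hyp (K : fieldType) n (p d : sconst K n) (o0 o1 : 'I_n) := {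
  Hp : coalg_morph p; Hd : coalg_morph d;
  h0 : nat_of_ord o0 = 0%N; h1 : nat_of_ord o1 = 1%N;
  ap : p o1 o0 o1 = 1; ad : d o1 o0 o1 = 1;
  bp : p o0 o1 o1 = 0; bd : d o0 o1 o1 = 0 }.

Definition IHm (K : fieldType) n (p d : sconst K n) (o1 : 'I_n) m :=
  forall x y : 'I_n, (nat_of_ord x + nat_of_ord y < m)%N -> d x y o1 = p x y o1.

Lemma ihf (K : fieldType) n (p d : sconst K n) o1 m : IHm p d o1 m ->
  forall a b : 'I_n, d a b o1 - p a b o1 != 0 -> (m <= nat_of_ord a + nat_of_ord b)%N.
Proof.
move=> IH a b nz; case: (leqP m (nat_of_ord a + nat_of_ord b)) => // lt.
by rewrite IH // subrr eqxx in nz.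
Qed.

Lemma S1v (K : fieldType) n (p d : sconst K n) o0 o1 m (hy : Hyp p d o0 o1) :
  IHm p d o1 m -> forall i j : 'I_n, (nat_of_ord i + nat_of_ord j = m)%N ->
  \sum_(s : 'I_n) \sum_(t : 'I_n) \sum_(a : 'I_n) \sum_(b : 'I_n)
     ((s + t)%N == o1)%:R * (p i s a * p j t b * d a b o1) -
  \sum_(s : 'I_n) \sum_(t : 'I_n) \sum_(a : 'I_n) \sum_(b : 'I_n)
     ((s + t)%N == o1)%:R * (p i s a * p j t b * p a b o1) =
  (nat_of_ord i + nat_of_ord j)%:R * p o1 o1 o1 * (d i j o1 - p i j o1).
Proof.
move=> IH i j ijm.
have h0 := h0 hy; have h1 := h1 hy.
have fdp := fdeg (Hp hy); have l1p := lead1f (Hp hy) h0 h1 (bp hy).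
have ie := ihf IH.
rewrite sum4B (@sum4_2 _ _ _ o0 o1 i j o1 o0 i j); first last.
- move=> s t a b.
  have -> : ((s + t)%N == o1)%:R * (p i s a * p j t b * d a b o1) -
            ((s + t)%N == o1)%:R * (p i s a * p j t b * p a b o1) =
            ((s + t)%N == o1)%:R * (p i s a * p j t b * (d a b o1 - p a b o1)) by ring.
  move=> /mulnz [/natrnz /eqP u /mulnz [/mulnz [q1 q2] q3]].
  move: (fdp _ _ _ q1) (l1p _ _ _ q1) (fdp _ _ _ q2) (l1p _ _ _ q2) (ie _ _ q3); rewrite ?valE => f1 f2 f3 f4 f5.
  have [s0|s1] : nat_of_ord s = 0%N \/ nat_of_ord s = 1%N by nlia.
    by left; split; apply: ord_inj; nlia.
  by right; split; apply: ord_inj; nlia.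
- by apply/negP => /and4P [/eqP e _ _ _]; rewrite e in h1; rewrite h0 in h1.
rewrite h0 h1 /= !mul1r.
rewrite (@lead0v _ _ _ (Hp hy) _ _ h0 h1 (ap hy) i o0 i) ?h0 //.
rewrite (@lead0v _ _ _ (Hp hy) _ _ h0 h1 (ap hy) j o0 j) ?h0 //.
rewrite (@subl _ _ _ (Hp hy) _ _ h0 h1 (ap hy) (bp hy) _ j erefl).
rewrite (@subl _ _ _ (Hp hy) _ _ h0 h1 (ap hy) (bp hy) _ i erefl).
rewrite natrD; ring.
Qed.

Lemma sum4D (K : fieldType) n (F G : 'I_n -> 'I_n -> 'I_n -> 'I_n -> K) :
  \sum_a \sum_b \sum_c \sum_e (F a b c e + G a b c e) =
  \sum_a \sum_b \sum_c \sum_e F a b c e + \sum_a \sum_b \sum_c \sum_e G a b c e.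
Proof.
rewrite -big_split; apply: eq_bigr => a _; rewrite -big_split; apply: eq_bigr => b _.
rewrite -big_split; apply: eq_bigr => c _; rewrite -big_split; apply: eq_bigr => e _ //.
Qed.

Lemma eq4 (K : fieldType) n (F G : 'I_n -> 'I_n -> 'I_n -> 'I_n -> K) :
  (forall a b c e, F a b c e = G a b c e) ->
  \sum_a \sum_b \sum_c \sum_e F a b c e = \sum_a \sum_b \sum_c \sum_e G a b c e.
Proof.
move=> H; apply: eq_bigr => a _; apply: eq_bigr => b _; apply: eq_bigr => c _; apply: eq_bigr => e _ //.
Qed.

Lemma S2v (K : fieldType) n (p d : sconst K n) o0 o1 m (hy : Hyp p d o0 o1) :
  (2 <= m)%N -> IHm p d o1 m -> forall i B j : 'I_n, (1 <= nat_of_ord i)%N ->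
  (nat_of_ord i + nat_of_ord B + nat_of_ord j = m.+1)%N ->
  \sum_(s : 'I_n) \sum_(t : 'I_n) \sum_(a : 'I_n) \sum_(b : 'I_n)
     ((s + t)%N == B)%:R * (p i s a * d j t b * p a b o1) -
  \sum_(s : 'I_n) \sum_(t : 'I_n) \sum_(a : 'I_n) \sum_(b : 'I_n)
     ((s + t)%N == B)%:R * (p i s a * p j t b * p a b o1) =
  p i o0 o1 * (d j B o1 - p j B o1) * p o1 o1 o1.
Proof.
move=> m2 IH i B j i1 ijm.
have h0 := h0 hy; have h1 := h1 hy.
have fdp := fdeg (Hp hy); have l1p := lead1f (Hp hy) h0 h1 (bp hy).
have c0p := cm0_nz (Hp hy).
have El := Elem (Hp hy) (Hd hy) h1 (ltnW m2) IH.
rewrite sum4B (@sum4_1 _ _ _ o0 B o1 o1); last first.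
move=> s t a b.
have -> : ((s + t)%N == B)%:R * (p i s a * d j t b * p a b o1) -
          ((s + t)%N == B)%:R * (p i s a * p j t b * p a b o1) =
          ((s + t)%N == B)%:R * (p i s a * (d j t b - p j t b) * p a b o1) by ring.
move=> /mulnz [/natrnz /eqP u /mulnz [/mulnz [q1 q2] q3]].
move: (fdp _ _ _ q1) (c0p _ _ _ q1) (El _ _ _ _ erefl q2) (fdp _ _ _ q3) (l1p _ _ _ q3) (c0p _ _ _ q3); rewrite ?valE => f1 f2 f3 f4 f5 f6.
by split; apply: ord_inj; nlia.
rewrite h0 add0n eqxx /=; ring.
Qed.

Lemma S3v (K : fieldType) n (p d : sconst K n) o0 o1 m (hy : Hyp p d o0 o1) :
  (2 <= m)%N -> IHm p d o1 m -> forall i j : 'I_n, (1 <= nat_of_ord i)%N ->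
  (nat_of_ord i + nat_of_ord j = m)%N ->
  \sum_(s : 'I_n) \sum_(t : 'I_n) \sum_(a : 'I_n) \sum_(b : 'I_n)
     ((s + t)%N == j)%:R * (d i t a * d o1 s b * p a b o1) -
  \sum_(s : 'I_n) \sum_(t : 'I_n) \sum_(a : 'I_n) \sum_(b : 'I_n)
     ((s + t)%N == j)%:R * (p i t a * p o1 s b * p a b o1) =
  (d i j o1 - p i j o1) * p o1 o1 o1 + p i o0 o1 * (d o1 j o1 - p o1 j o1) * p o1 o1 o1.
Proof.
move=> m2 IH i j i1 ijm.
have h0 := h0 hy; have h1 := h1 hy.
have fdp := fdeg (Hp hy); have l1p := lead1f (Hp hy) h0 h1 (bp hy).
have fdd := fdeg (Hd hy).
have c0p := cm0_nz (Hp hy); have c0d := cm0_nz (Hd hy).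
have El := Elem (Hp hy) (Hd hy) h1 (ltnW m2) IH.
rewrite sum4B.
rewrite (@eq4 _ _ _ (fun s t a b =>
   ((s + t)%N == j)%:R * ((d i t a - p i t a) * d o1 s b * p a b o1) +
   ((s + t)%N == j)%:R * (p i t a * (d o1 s b - p o1 s b) * p a b o1))); last by move=> s t a b /=; ring.
rewrite sum4D (@sum4_1 _ _ _ o0 j o1 o1); last first.
  move=> s t a b /mulnz [/natrnz /eqP u /mulnz [/mulnz [q1 q2] q3]].
  move: (El _ _ _ _ erefl q1) (fdd _ _ _ q2) (c0d _ _ _ q2) (fdp _ _ _ q3) (l1p _ _ _ q3) (c0p _ _ _ q3); rewrite ?valE => f1 f2 f3 f4 f5 f6.
  by split; apply: ord_inj; nlia.
rewrite (@sum4_1 _ _ _ j o0 o1 o1); last first.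
  move=> s t a b /mulnz [/natrnz /eqP u /mulnz [/mulnz [q1 q2] q3]].
  move: (fdp _ _ _ q1) (c0p _ _ _ q1) (El _ _ _ _ erefl q2) (fdp _ _ _ q3) (l1p _ _ _ q3) (c0p _ _ _ q3); rewrite ?valE => f1 f2 f3 f4 f5 f6.
  by split; apply: ord_inj; nlia.
by rewrite h0 add0n addn0 eqxx /= (ad hy); ring.
Qed.



Lemma swapR (K : fieldType) n (p : sconst K n) (i B j o1 : 'I_n) :
  \sum_(s : 'I_n) \sum_(t : 'I_n) \sum_(a : 'I_n) \sum_(b : 'I_n)
     ((s + t)%N == j)%:R * (p i t a * p B s b * p a b o1) =
  \sum_(s : 'I_n) \sum_(t : 'I_n) \sum_(a : 'I_n) \sum_(b : 'I_n)
     ((s + t)%N == j)%:R * (p i s a * p B t b * p a b o1).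
Proof.
rewrite exchange_big; apply: eq_bigr => s _; apply: eq_bigr => t _.
by rewrite addnC.
Qed.

Lemma step (K : fieldType) n (p d : sconst K n) o0 o1 m (hy : Hyp p d o0 o1) :
  [pchar K] =i pred0 -> p o1 o1 o1 != 0 -> qcycle_ids p d ->
  (2 <= m)%N -> IHm p d o1 m ->
  forall x y : 'I_n, (nat_of_ord x + nat_of_ord y = m)%N -> d x y o1 = p x y o1.
Proof.
move=> ch g0 Q m2 IH.
have h0 := h0 hy; have h1 := h1 hy.
have EQ1 : forall i B j : 'I_n,
  \sum_(s : 'I_n) \sum_(t : 'I_n) \sum_(a : 'I_n) \sum_(b : 'I_n)
     ((s + t)%N == B)%:R * (p i s a * d j t b * p a b o1) =
  \sum_(s : 'I_n) \sum_(t : 'I_n) \sum_(a : 'I_n) \sum_(b : 'I_n)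
     ((s + t)%N == j)%:R * (p i t a * p B s b * p a b o1).
  move=> i B j; case: (Q (bx i) (bx B) (bx j)) => E1 _ _.
  by move/(congr1 (fun v : 'rV[K]_n => v 0 o1)): E1; rewrite Lshape Rshape.
have EQ2 : forall i B j : 'I_n,
  \sum_(s : 'I_n) \sum_(t : 'I_n) \sum_(a : 'I_n) \sum_(b : 'I_n)
     ((s + t)%N == B)%:R * (p i s a * p j t b * d a b o1) =
  \sum_(s : 'I_n) \sum_(t : 'I_n) \sum_(a : 'I_n) \sum_(b : 'I_n)
     ((s + t)%N == j)%:R * (d i t a * d B s b * p a b o1).
  move=> i B j; case: (Q (bx i) (bx B) (bx j)) => _ E2 _.
  by move/(congr1 (fun v : 'rV[K]_n => v 0 o1)): E2; rewrite Lshape Rshape.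
have anti : forall B j : 'I_n, (nat_of_ord B + nat_of_ord j = m)%N ->
    (d j B o1 - p j B o1) + (d B j o1 - p B j o1) = 0.
  move=> B j hBj.
  have a1 := S2v hy m2 IH (i := o1) (B := B) (j := j) (eq_leq (esym h1)) ltac:(nlia).
  have a2 := S2v hy m2 IH (i := o1) (B := j) (j := B) (eq_leq (esym h1)) ltac:(nlia).
  rewrite EQ1 swapR in a1; rewrite EQ1 swapR in a2.
  have : p o1 o0 o1 * (d j B o1 - p j B o1) * p o1 o1 o1 +
         p o1 o0 o1 * (d B j o1 - p B j o1) * p o1 o1 o1 = 0.
    by rewrite -a1 -a2; ring.
  rewrite (ap hy) !mul1r -mulrDl => /eqP; rewrite mulf_eq0 (negbTE g0) orbF.
  by move/eqP.
have pos : forall x y : 'I_n, (1 <= nat_of_ord x)%N -> (nat_of_ord x + nat_of_ord y = m)%N ->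
    d x y o1 = p x y o1.
  move=> i j i1 ijm.
  have s1 := S1v hy IH ijm.
  have s2 := S2v hy m2 IH (i := i) (B := o1) (j := j) i1 ltac:(nlia).
  have s3 := S3v hy m2 IH i1 ijm.
  rewrite EQ2 in s1; rewrite EQ1 in s2.
  have key : (nat_of_ord i + nat_of_ord j)%:R * p o1 o1 o1 * (d i j o1 - p i j o1) -
             p i o0 o1 * (d j o1 o1 - p j o1 o1) * p o1 o1 o1 -
             ((d i j o1 - p i j o1) * p o1 o1 o1 +
              p i o0 o1 * (d o1 j o1 - p o1 j o1) * p o1 o1 o1) = 0.
    by rewrite -s1 -s2 -s3; ring.
  have z : p i o0 o1 * ((d j o1 o1 - p j o1 o1) + (d o1 j o1 - p o1 j o1)) = 0.
    case: (leqP 2 (nat_of_ord i)) => i2.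
      rewrite !IH ?subrr ?addr0 ?mulr0 //; nlia.
    have -> : i = o1 by apply: ord_inj; nlia.
    by rewrite anti ?mulr0 //; nlia.
  have : ((nat_of_ord i + nat_of_ord j).-1)%:R * p o1 o1 o1 * (d i j o1 - p i j o1) = 0.
    rewrite -key.
    have -> : (nat_of_ord i + nat_of_ord j = (nat_of_ord i + nat_of_ord j).-1.+1)%N by nlia.
    rewrite -natr1 /=.
    move: z; set u := p i o0 o1; move=> z.
    have -> : u * (d j o1 o1 - p j o1 o1) * p o1 o1 o1 = 
              - (u * (d o1 j o1 - p o1 j o1) * p o1 o1 o1).
      apply/eqP; rewrite -subr_eq0 opprK -mulrDl -mulrDr z mul0r //.
    ring.
  move/eqP; rewrite !mulf_eq0 (negbTE g0) orbF.
  move/pcharf0P: ch => ->; case/orP => [/eqP ?|]; [nlia | by rewrite subr_eq0 => /eqP].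
move=> x y hxy.
case: (leqP 1 (nat_of_ord x)) => x1; first exact: pos.
have := anti x y hxy.
rewrite (pos y x); [|nlia|nlia].
by rewrite subrr add0r => /eqP; rewrite subr_eq0 => /eqP.
Qed.



Lemma Ushape (K : fieldType) n (f h : sconst K n) i B k :
  (sw (fun b1 b2 => bil h (bil f (bx i) b1) b2) (bx B)) 0 k =
  \sum_(s : 'I_n) \sum_(t : 'I_n) \sum_(a : 'I_n) \sum_(b : 'I_n)
    ((s + t)%N == B)%:R * (f i s a * (t == b)%:R * h a b k).
Proof.
rewrite swE; apply: eq_bigr => s _; apply: eq_bigr => t _.
rewrite copE bilE mulr_sumr; apply: eq_bigr => a _; rewrite mulr_sumr; apply: eq_bigr => b _.
by rewrite bil_bx bxE.
Qed.

Lemma Vshape (K : fieldType) n (f h : sconst K n) i B k :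
  (sw (fun b1 b2 => bil h (bil f (bx i) b2) b1) (bx B)) 0 k =
  \sum_(s : 'I_n) \sum_(t : 'I_n) \sum_(a : 'I_n) \sum_(b : 'I_n)
    ((s + t)%N == B)%:R * (f i t a * (s == b)%:R * h a b k).
Proof.
rewrite swE; apply: eq_bigr => s _; apply: eq_bigr => t _.
rewrite copE bilE mulr_sumr; apply: eq_bigr => a _; rewrite mulr_sumr; apply: eq_bigr => b _.
by rewrite bil_bx bxE.
Qed.

Lemma alpha_u (K : fieldType) n (p u : sconst K n) (o0 o1 : 'I_n) :
  coalg_morph u -> nat_of_ord o0 = 0%N -> nat_of_ord o1 = 1%N ->
  sw (fun b1 b2 => bil p (bil u (bx o1) b1) b2) (bx o0) = eps (bx o0) *: bx o1 ->
  u o1 o0 o1 * p o1 o0 o1 = 1.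
Proof.
move=> Hu h0 h1 /(congr1 (fun v : 'rV[K]_n => v 0 o1)).
rewrite mxE bxE eqxx epsE0 ?valE // mulr1 Ushape.
have fdu := fdeg Hu; have c0u := cm0_nz Hu.
rewrite (@sum4_1 _ _ _ o0 o0 o1 o0).
  by rewrite h0 eqxx mul1r mulr1.
move=> s t a b /mulnz [/natrnz /eqP u0 /mulnz [/mulnz [q1 /natrnz /eqP q2] q3]].
subst; move: (fdu _ _ _ q1) (c0u _ _ _ q1); rewrite ?valE => f1 f2.
by split; apply: ord_inj; nlia.
Qed.

Lemma alpha_v (K : fieldType) n (d v : sconst K n) (o0 o1 : 'I_n) :
  coalg_morph d -> nat_of_ord o0 = 0%N -> nat_of_ord o1 = 1%N ->
  sw (fun b1 b2 => bil v (bil d (bx o1) b2) b1) (bx o0) = eps (bx o0) *: bx o1 ->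
  d o1 o0 o1 * v o1 o0 o1 = 1.
Proof.
move=> Hd h0 h1 /(congr1 (fun w : 'rV[K]_n => w 0 o1)).
rewrite mxE bxE eqxx epsE0 ?valE // mulr1 Vshape.
have fdd := fdeg Hd; have c0d := cm0_nz Hd.
rewrite (@sum4_1 _ _ _ o0 o0 o1 o0).
  by rewrite h0 eqxx mul1r mulr1.
move=> s t a b /mulnz [/natrnz /eqP u0 /mulnz [/mulnz [q1 /natrnz /eqP q2] q3]].
subst; move: (fdd _ _ _ q1) (c0d _ _ _ q1); rewrite ?valE => f1 f2.
by split; apply: ord_inj; nlia.
Qed.

Lemma alphas (K : fieldType) n (p d : sconst K n) (o0 o1 : 'I_n) :
  coalg_morph p -> coalg_morph d -> nat_of_ord o0 = 0%N -> nat_of_ord o1 = 1%N ->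
  p o0 o1 o1 = 0 -> d o0 o1 o1 = 0 -> p o1 o0 o1 != 0 -> p o1 o1 o1 != 0 ->
  qcycle_ids p d -> p o1 o0 o1 = 1 /\ d o1 o0 o1 = 1.
Proof.
move=> Hp Hd h0 h1 bp bd a0 g0 Q.
have EQ1 : forall i B j : 'I_n,
  \sum_(s : 'I_n) \sum_(t : 'I_n) \sum_(a : 'I_n) \sum_(b : 'I_n)
     ((s + t)%N == B)%:R * (p i s a * d j t b * p a b o1) =
  \sum_(s : 'I_n) \sum_(t : 'I_n) \sum_(a : 'I_n) \sum_(b : 'I_n)
     ((s + t)%N == j)%:R * (p i t a * p B s b * p a b o1).
  move=> i B j; case: (Q (bx i) (bx B) (bx j)) => E1 _ _.
  by move/(congr1 (fun v : 'rV[K]_n => v 0 o1)): E1; rewrite Lshape Rshape.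
have fdp := fdeg Hp; have fdd := fdeg Hd.
have c0p := cm0_nz Hp; have c0d := cm0_nz Hd.
have l1p := lead1f Hp h0 h1 bp; have l1d := lead1f Hd h0 h1 bd.
have p000 : p o0 o0 o0 = 1 by rewrite (cm0 Hp) ?valE ?h0 ?eqxx.
have d000 : d o0 o0 o0 = 1 by rewrite (cm0 Hd) ?valE ?h0 ?eqxx.
have A : p o1 o0 o1 = 1.
  have := EQ1 o1 o1 o0.
  rewrite (@sum4_1 _ _ _ o1 o0 o1 o0); last first.
    move=> s t a b /mulnz [/natrnz /eqP u /mulnz [/mulnz [q1 q2] q3]].
    move: (fdp _ _ _ q1) (c0p _ _ _ q1) (l1p _ _ _ q1) (fdd _ _ _ q2) (c0d _ _ _ q2)
      (l1d _ _ _ q2) (fdp _ _ _ q3) (c0p _ _ _ q3) (l1p _ _ _ q3);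
      rewrite ?valE => f1 f2 f3 f4 f5 f6 f7 f8 f9.
    by split; apply: ord_inj; nlia.
  rewrite (@sum4_1 _ _ _ o0 o0 o1 o1); last first.
    move=> s t a b /mulnz [/natrnz /eqP u /mulnz [/mulnz [q1 q2] q3]].
    move: (fdp _ _ _ q1) (c0p _ _ _ q1) (l1p _ _ _ q1) (fdp _ _ _ q2) (c0p _ _ _ q2)
      (l1p _ _ _ q2) (fdp _ _ _ q3) (c0p _ _ _ q3) (l1p _ _ _ q3);
      rewrite ?valE => f1 f2 f3 f4 f5 f6 f7 f8 f9.
    by split; apply: ord_inj; nlia.
  rewrite h0 h1 /= d000 => E.
  have : (p o1 o0 o1 * p o1 o1 o1) * (p o1 o0 o1 - 1) = 0.
    have e2 : forall x y : K, x = y -> x - y = 0 by move=> ? ? ->; rewrite subrr.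
    move: (e2 _ _ E) => E2; rewrite -[RHS]oppr0 -E2; ring.
  move/eqP; rewrite mulf_eq0 mulf_eq0 (negbTE a0) (negbTE g0) /= subr_eq0 => /eqP //.
split => //.
have := EQ1 o1 o0 o1.
rewrite (@sum4_1 _ _ _ o0 o0 o1 o1); last first.
  move=> s t a b /mulnz [/natrnz /eqP u /mulnz [/mulnz [q1 q2] q3]].
  move: (fdp _ _ _ q1) (c0p _ _ _ q1) (l1p _ _ _ q1) (fdd _ _ _ q2) (c0d _ _ _ q2)
    (l1d _ _ _ q2) (fdp _ _ _ q3) (c0p _ _ _ q3) (l1p _ _ _ q3);
    rewrite ?valE => f1 f2 f3 f4 f5 f6 f7 f8 f9.
  by split; apply: ord_inj; nlia.
rewrite (@sum4_1 _ _ _ o0 o1 o1 o0); last first.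
  move=> s t a b /mulnz [/natrnz /eqP u /mulnz [/mulnz [q1 q2] q3]].
  move: (fdp _ _ _ q1) (c0p _ _ _ q1) (l1p _ _ _ q1) (fdp _ _ _ q2) (c0p _ _ _ q2)
    (l1p _ _ _ q2) (fdp _ _ _ q3) (c0p _ _ _ q3) (l1p _ _ _ q3);
    rewrite ?valE => f1 f2 f3 f4 f5 f6 f7 f8 f9.
  by split; apply: ord_inj; nlia.
rewrite h0 h1 /= p000 A => E.
have : p o1 o1 o1 * (d o1 o0 o1 - 1) = 0.
  have e2 : forall x y : K, x = y -> x - y = 0 by move=> ? ? ->; rewrite subrr.
  move: (e2 _ _ E) => E2; rewrite -E2; ring.
by move/eqP; rewrite mulf_eq0 (negbTE g0) /= subr_eq0 => /eqP.
Qed.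


Unset Implicit Arguments.


Theorem theorem4p4 (K : closedFieldType) (n : nat) (p d : sconst K n) :
  [pchar K] =i pred0 ->
  (2 <= n)%N ->
  regular_qcycle p d ->
  (forall one : 'I_n, val one = 1%N -> p one one one != 0) ->
  forall i j k : 'I_n, d i j k = p i j k.
Proof.
move=> ch n2 [Hp Hd [u [v [Hu [Hv R]]]] Q] g.
have h0n : (0 < n)%N by apply: ltnW.
pose o0 := Ordinal h0n; pose o1 := Ordinal n2.
have h0 : nat_of_ord o0 = 0%N by [].
have h1 : nat_of_ord o1 = 1%N by [].
clearbody o0 o1.
have g0 : p o1 o1 o1 != 0 by apply: g; rewrite valE.
case: (R (bx o1) (bx o0)) => Ru _ Rv _.
have a0 : p o1 o0 o1 != 0.
  apply/eqP => e; move: (alpha_u Hu h0 h1 Ru); rewrite e mulr0 => /eqP.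
  by rewrite eq_sym oner_eq0.
have a0d : d o1 o0 o1 != 0.
  apply/eqP => e; move: (alpha_v Hd h0 h1 Rv); rewrite e mul0r => /eqP.
  by rewrite eq_sym oner_eq0.
have bp := beta0 Hp ch h0 h1 a0.
have bd := beta0 Hd ch h0 h1 a0d.
have [ap ad] := alphas Hp Hd h0 h1 bp bd a0 g0 Q.
have hy : Hyp p d o0 o1 := Build_Hyp Hp Hd h0 h1 ap ad bp bd.
have base : IHm p d o1 2.
  move=> x y lt.
  have [x0|x1] : nat_of_ord x = 0%N \/ nat_of_ord x = 1%N by nlia.
    have ex : x = o0 by apply: ord_inj; rewrite x0 h0.
    have [y0|y1] : nat_of_ord y = 0%N \/ nat_of_ord y = 1%N by nlia.
      have ey : y = o0 by apply: ord_inj; rewrite y0 h0.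
      by rewrite ex ey (f001 Hp) ?(f001 Hd) ?valE.
    have ey : y = o1 by apply: ord_inj; rewrite y1 h1.
    by rewrite ex ey bp bd.
  have ex : x = o1 by apply: ord_inj; rewrite x1 h1.
  have ey : y = o0 by apply: ord_inj; nlia.
  by rewrite ex ey ap ad.
have all : forall m, IHm p d o1 m.+2.
  elim=> [//|m IH] x y lt.
  case: (leqP m.+2 (nat_of_ord x + nat_of_ord y)) => lt'; last exact: IH.
  apply: (step hy ch g0 Q (m := m.+2)) => //; nlia.
move=> i j k.
apply/eqP; rewrite -subr_eq0; apply/negPn/negP => nz.
have El := Elem Hp Hd h1 (m := (n.*2).+2) erefl (all _).
move: (El _ i j k erefl nz) => [_].
have := ltn_ord i; have := ltn_ord j; nlia.
Qed.
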